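(* Let $\Phi$ be a finite NCIFS on $X\subset\mathbb R^d$, let $t_0>0$, and let $(\alpha_n)$ be a sequence with $\alpha_n\ge1$ and $\alpha_n\to\infty$. Then there exist sets $I^{(n)}_f\subset I^{(n)}$ such that the subsystem $\Phi_f$, with $\Phi_f^{(n)}=(\phi^{(n)}_a)_{a\in I^{(n)}_f}$, has the following properties: - $\underline P^{\Phi_f}(t)=\underline P^{\Phi}(t)$ for all $t\ge t_0$; - for all $n$, \[\rho_n(\Phi_f):=\max_{a,b\in I^{(n)}_f}\frac{\|D\phi^{(n)}_a\|}{\|D\phi^{(n)}_b\|}\le\alpha_n\,(\# I^{(n)})^{1/t_0}.\]
   Context: Fix $d\in\mathbb N$ and a compact set $X\subset\mathbb R^d$ equal to the closure of its interior, such that $\partial X$ is smooth or $X$ is convex. $\|D\phi\|:=\sup_{x\in X}|\phi'(x)|$ for a conformal map $\phi$. An NCIFS $\Phi$ on $X$ is a sequence $\Phi^{(j)}=(\phi^{(j)}_i:X\to X)_{i\in I^{(j)}}$, $j\ge1$, of families indexed by finite or countably infinite sets, satisfying: - (open set condition) images of $\operatorname{int}X$ under distinct maps of the same $\Phi^{(j)}$ are disjoint; - (conformality) there is an open connected $V\supset X$ such that all maps extend to $C^1$ conformal diffeomorphisms of $V$ into $V$; - (bounded distortion) there is $K\ge1$ with $|\phi'(x)|\le K|\phi'(y)|$ for $x,y\in V$ and every composition $\phi=\phi^{(k)}_{\omega_k}\circ\cdots\circ\phi^{(l)}_{\omega_l}$, $k\le l$; - (uniform contraction) $\|D\phi^{(j)}_i\|\le\eta<1$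 for all $i,j$. Finite means every $I^{(j)}$ is finite. For $\omega\in I^n=\prod_{j\le n}I^{(j)}$ let $\phi_\omega=\phi^{(1)}_{\omega_1}\circ\cdots\circ\phi^{(n)}_{\omega_n}$. For a system $\Psi$, $Z^\Psi_n(t)=\sum_{\omega\in I^n}\|D\phi_\omega\|^t$ over its words, and $\underline P^\Psi(t)=\liminf_n\frac1n\log Z^\Psi_n(t)$. *)

(* Defs.v *)
From HB Require Import structures.
From mathcomp Require Import all_boot all_order all_algebra.
From mathcomp Require Import all_classical all_reals all_analysis.
Set Implicit Arguments. Unset Strict Implicit. Unset Printing Implicit Defensive.
Import Order.TTheory GRing.Theory Num.Theory.
Import numFieldNormedType.Exports.
Local Open Scope classical_set_scope.
Local Open Scope ring_scope.

Section NCIFS.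
Variables (R : realType) (d : nat).
Notation V := 'rV[R]_d.

(* Euclidean norm on R^d (the library norm on 'rV is the sup norm). *)
Definition enorm (v : V) : R := Num.sqrt (\sum_(i < d) (v ord0 i) ^+ 2).

(* |phi'(x)| : operator norm (w.r.t. the Euclidean norm) of the derivative;
   for a conformal map this is the similarity ratio of D phi(x). *)
Definition dnorm (phi : V -> V) (x : V) : R :=
  sup [set enorm ('d phi x h) | h in [set h : V | enorm h = 1]].

Definition Dnorm (X : set V) (phi : V -> V) : R :=
  sup [set dnorm phi x | x in X].

Definition convex_setE (X : set V) : Prop :=
  forall x y (t : R), X x -> X y -> 0 <= t <= 1 -> X (t *: x + (1 - t) *: y).

Fixpoint iterD (vs : seq V) (g : V -> R) : V -> R :=
  match vs with
  | [::] => g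
  | v :: vs' => fun x => 'D_v (iterD vs' g) x
  end.

Definition smooth_on (U : set V) (g : V -> R) : Prop :=
  forall (vs : seq V) x, U x -> differentiable (iterD vs g) x.

(* the boundary of X is a smooth hypersurface: locally X = {g <= 0},
   g smooth with nonvanishing differential. *)
Definition smooth_boundary (X : set V) : Prop :=
  forall p, (closure X `\` X°) p ->
  exists (U : set V) (g : V -> R),
    [/\ open U, U p, smooth_on U g, (exists h, 'd g p h != 0)
      & X `&` U = [set x | U x /\ g x <= 0]].

Definition admissible_X (X : set V) : Prop :=
  [/\ compact X, X = closure (X°) & (smooth_boundary X \/ convex_setE X)].

(* A finite non-autonomous system: stage j (j = 0,1,2,... stands for the
   paper's stage j+1) has index set 'I_(N j) and maps phi j i. *)
Definition comp_seq (fs : seq (V -> V)) : V -> V := foldr (fun f g => f \o g) id fs.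

Definition comp_from (N : nat -> nat) (phi : forall j, 'I_(N j) -> V -> V)
  (k m : nat) (w : forall j : 'I_m, 'I_(N (k + j))) : V -> V :=
  comp_seq [seq phi (k + j)%N (w j) | j : 'I_m <- enum 'I_m].

Definition comp_word (N : nat -> nat) (phi : forall j, 'I_(N j) -> V -> V)
  (n : nat) (w : {dffun forall j : 'I_n, 'I_(N j)}) : V -> V :=
  comp_seq [seq phi j (w j) | j : 'I_n <- enum 'I_n].

Definition conformal_C1_into (U : set V) (f : V -> V) : Prop :=
  [/\ (forall x, U x -> U (f x)),
      {in U &, injective f},
      (forall x, U x -> differentiable f x),
      (forall h x, U x -> {for x, continuous (fun y => 'd f y h)})
    & (forall x, U x -> exists2 c : R, 0 < c &
          forall h, enorm ('d f x h) = c * enorm h)].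

Definition is_NCIFS (X : set V) (N : nat -> nat)
  (phi : forall j, 'I_(N j) -> V -> V) : Prop :=
  [/\ (forall j i, phi j i @` X `<=` X),
      (forall j (i i' : 'I_(N j)), i != i' ->
          phi j i @` X° `&` phi j i' @` X° = set0),
      (exists U : set V, [/\ open U, connected U, X `<=` U,
          (forall j i, conformal_C1_into U (phi j i)) &
          exists2 K : R, 1 <= K &
            forall k m (w : forall j : 'I_m.+1, 'I_(N (k + j)%N)) x y,
              U x -> U y ->
              dnorm (comp_from phi w) x <= K * dnorm (comp_from phi w) y])
    &
      (exists2 eta : R, eta < 1 & forall j i, Dnorm X (phi j i) <= eta)].

Definition Zn (X : set V) (N : nat -> nat) (phi : forall j, 'I_(N j) -> V -> V)
  (n : nat) (t : R) : R :=
  \sum_(w : {dffun forall j : 'I_n, 'I_(N j)}) (Dnorm X (comp_word phi w)) `^ t.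

Definition lower_pressure (X : set V) (N : nat -> nat)
  (phi : forall j, 'I_(N j) -> V -> V) (t : R) : \bar R :=
  limn_einf (fun n => ((ln (Zn X phi n.+1 t)) / n.+1%:R)%:E).

(* the subsystem (phi^(j)_a)_{a in F j}, reindexed by 'I_#|F j| *)
Definition subN (N : nat -> nat) (F : forall j, {set 'I_(N j)}) (j : nat) : nat :=
  #|F j|.
Definition subphi (N : nat -> nat) (phi : forall j, 'I_(N j) -> V -> V)
  (F : forall j, {set 'I_(N j)}) (j : nat) (i : 'I_(subN F j)) : V -> V :=
  phi j (enum_val i).

End NCIFS.
Arguments subphi {R d N} phi F j i.
Arguments subN {N} F j.

(* Main.v *)
Require Import Defs.
From HB Require Import structures.
From mathcomp Require Import all_boot all_order all_algebra.
From mathcomp Require Import all_classical all_reals all_analysis.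
From mathcomp Require Import ring lra.
Import Order.TTheory GRing.Theory Num.Theory.
Import numFieldNormedType.Exports.
Local Open Scope classical_set_scope.
Local Open Scope ring_scope.
Set Implicit Arguments. Unset Strict Implicit. Unset Printing Implicit Defensive.

Lemma arith3 (R : realFieldType) (K DA DB pPA pA pS pPB pB W : R) :
  0 < K -> 0 < pPA -> 0 < pA -> 0 < pS -> 0 < pPB -> 0 < pB -> 0 < DB -> 0 < DA ->
  pPA <= K * pPB -> pA <= K * DA -> DB <= K * pB -> pPB * (pB * pS) <= W ->
  pPA * (pA * pS) * DB <= K ^+ 3 * DA * W.
Proof.
move=> K0 p1 p2 p3 p4 p5 p6 p7 h1 h2 h3 h4.
apply: (le_trans (y := (K * pPB) * ((K * DA) * pS) * (K * pB))).
  apply: ler_pM.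
  - by apply: mulr_ge0; apply: ltW; [|apply: mulr_gt0].
  - exact: ltW.
  - apply: ler_pM; [exact: ltW|apply: ltW; exact: mulr_gt0|exact: h1|].
    apply: ler_pM; [exact: ltW|exact: ltW|exact: h2|exact: lexx].
  - exact: h3.
have -> : (K * pPB) * ((K * DA) * pS) * (K * pB) = K ^+ 3 * DA * (pPB * (pB * pS)).
  by rewrite !exprS expr0 mulr1; ring.
by rewrite (ler_pM2l (mulr_gt0 (exprn_gt0 3 K0) p7)).
Qed.

Lemma pow_bound (R : realType) (t s0 al N Da Dm Kc : R) : 0 < t -> 0 < s0 -> s0 <= t -> 1 <= al ->
  1 <= N -> 0 < Dm -> 0 <= Da -> 0 <= Kc -> al * N `^ s0^-1 * Da <= Dm ->
  (Kc * Da / Dm) `^ t <= Kc `^ t / (al `^ t * N).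
Proof.
move=> t0 s00 st al1 N1 Dm0 Da0 Kc0 h.
have al0 : 0 < al by apply: lt_le_trans al1.
have N0 : 0 < N by apply: lt_le_trans N1.
set q := N `^ s0^-1.
have q0 : 0 < q by apply: powR_gt0.
have aq0 : 0 < al * q by apply: mulr_gt0.
have e1 : Kc * Da / Dm <= Kc / (al * q).
  rewrite -mulrA; apply: (ler_wpM2l Kc0).
  rewrite ler_pdivrMr // -(ler_pM2l aq0) mulrA mulfV ?mul1r //.
  exact: lt0r_neq0.
have c0 : 0 <= Kc / (al * q) by apply: divr_ge0 => //; apply: ltW.
have e2 : (Kc * Da / Dm) `^ t <= (Kc / (al * q)) `^ t.
  apply: (ge0_ler_powR (ltW t0)); last exact: e1.
  - by rewrite nnegrE; apply: divr_ge0; [apply: mulr_ge0|apply: ltW].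
  - by rewrite nnegrE.
apply: le_trans e2 _.
have e3 : Kc `^ t = (Kc / (al * q)) `^ t * (al `^ t * q `^ t).
  rewrite -(powRM _ (ltW al0) (ltW q0)) -(powRM _ c0 (ltW aq0)).
  by rewrite divfK // lt0r_neq0.
have qt : N <= q `^ t.
  rewrite /q -powRrM -[X in X <= _](powRr1 (ltW N0)); apply: (ler_powR N1).
  by rewrite -(ler_pM2l s00) mulr1 mulrA mulfV ?mul1r // lt0r_neq0.
have pt : 0 < al `^ t * q `^ t by apply: mulr_gt0; apply: powR_gt0.
have Q0 : 0 < al `^ t * N by apply: mulr_gt0 => //; apply: powR_gt0.
rewrite e3 (ler_pdivlMr _ _ Q0); apply: (ler_wpM2l (powR_ge0 _ _)).
by apply: (ler_wpM2l (powR_ge0 _ _)).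
Qed.

Lemma liminf_sandwich (R : realType) (a b e : nat -> R) :
  (forall n, a n <= b n) -> (forall n, b n <= a n + e n) -> e @ \oo --> 0 ->
  limn_einf (fun n => (b n)%:E) = limn_einf (fun n => (a n)%:E).
Proof.
move=> ab bae he; apply/le_anti/andP; split.
  apply/lee_addgt0Pr => eps eps0.
  rewrite addeC -limn_einf_shift // !limn_einf_lim.
  apply: lee_lim; [exact: is_cvg_einfs|exact: is_cvg_einfs|].
  move/cvgrPdist_le: he => /(_ eps eps0) [N0 _ hN].
  exists N0 => // n /= hn.
  apply: le_ereal_inf_tmp => _ [k /= hk <-].
  apply: le_trans (ereal_inf_lbound _) _; first by exists k.
  rewrite lee_fin addrC (le_trans (bae k)) // lerD2l.
  have := hN k (leq_trans hn hk); rewrite /= sub0r normrN.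
  by move/(le_trans (ler_norm _)).
rewrite !limn_einf_lim; apply: lee_lim; [exact: is_cvg_einfs|exact: is_cvg_einfs|].
apply: nearW => n.
apply: le_ereal_inf_tmp => _ [k /= hk <-].
apply: le_trans (ereal_inf_lbound _) _; first by exists k.
by rewrite lee_fin.
Qed.

Lemma u_cvg (R : realType) (alpha : nat -> R) (c t : R) : 0 <= c -> 0 < t ->
  (forall n, 1 <= alpha n) -> alpha @ \oo --> +oo ->
  (fun n => c / alpha n `^ t) @ \oo --> 0.
Proof.
move=> c0 t0 al1 /cvgryPge hal; apply/cvgrPdist_le => eps eps0.
have := hal ((c / eps) `^ t^-1); apply: filterS => n hn.
have a0 : 0 < alpha n by apply: lt_le_trans (al1 n).
have at0 : 0 < alpha n `^ t by apply: powR_gt0.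
have ce0 : 0 <= c / eps by apply: divr_ge0 => //; apply: ltW.
rewrite sub0r normrN ger0_norm; last by apply: divr_ge0 => //; apply: ltW.
rewrite ler_pdivrMr // -ler_pdivrMl // mulrC.
have -> : c / eps = ((c / eps) `^ t^-1) `^ t.
  by rewrite -powRrM mulVf ?powRr1 // lt0r_neq0.
apply: (ge0_ler_powR (ltW t0)) => //; rewrite nnegrE ?powR_ge0 //.
exact: ltW.
Qed.


Lemma ln_prod (R : realType) n (u : nat -> R) : (forall j, 0 <= u j) ->
  ln (\prod_(j < n) (1 + u j)) <= \sum_(j < n) u j.
Proof.
move=> u0.
have P0 : 0 < \prod_(j < n) (1 + u j).
  by apply: prodr_gt0 => j _; apply: (lt_le_trans ltr01); rewrite lerDl; exact: u0.
have h : \prod_(j < n) (1 + u j) <= expR (\sum_(j < n) u j).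
  rewrite expR_sum; apply: ler_prod => j _; apply/andP; split.
    by apply: addr_ge0; [exact: ler01|exact: u0].
  exact: expR_ge1Dx.
rewrite -[X in _ <= X]expRK ler_ln ?posrE //; exact: expR_gt0.
Qed.

Section Analysis.
Variables (R : realType) (d : nat) (hd : (0 < d)%N).
Notation V := 'rV[R]_d.

Definition e0 : V := \row_(i < d) (i == Ordinal hd)%:R.

Lemma enorm_e0 : enorm e0 = 1.
Proof.
rewrite /enorm (bigD1 (Ordinal hd)) //= big1 ?addr0.
  by rewrite mxE eqxx expr1n sqrtr1.
by move=> i hi; rewrite mxE (negbTE hi) expr0n.
Qed.

Definition CA (f : V -> V) (x : V) :=
  differentiable f x /\ exists2 c : R, 0 < c & forall h, enorm ('d f x h) = c * enorm h.

Lemma dnormE (f : V -> V) x c : (forall h, enorm ('d f x h) = c * enorm h) -> dnorm f x = c.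
Proof.
move=> hc; rewrite /dnorm.
have -> : [set enorm ('d f x h) | h in [set h : V | enorm h = 1]] = [set c].
  apply/seteqP; split => y /=.
    by move=> [h /= h1 <-]; rewrite hc h1 mulr1.
  by move=> ->; exists e0; rewrite /= ?enorm_e0 // hc enorm_e0 mulr1.
by rewrite sup1.
Qed.

Lemma CA_dnorm (f : V -> V) x : CA f x -> 0 < dnorm f x /\ forall h, enorm ('d f x h) = dnorm f x * enorm h.
Proof. by move=> [_ [c c0 hc]]; rewrite (dnormE hc). Qed.

Lemma CA_comp (f g : V -> V) x : CA g x -> CA f (g x) ->
  CA (f \o g) x /\ dnorm (f \o g) x = dnorm f (g x) * dnorm g x.
Proof.
move=> [dg [cg cg0 hg]] [df [cf cf0 hf]].
have hc : forall h, enorm ('d (f \o g) x h) = (cf * cg) * enorm h.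
  by move=> h; rewrite diff_comp // /= hf hg mulrA.
split; first by split; [exact: differentiable_comp| exists (cf * cg) => //; exact: mulr_gt0].
by rewrite (dnormE hc) (dnormE hf) (dnormE hg).
Qed.

Lemma CA_id x : CA id x /\ dnorm id x = 1.
Proof.
have hid : forall h, enorm ('d (@id V) x h) = 1 * enorm h.
  by move=> h; rewrite diff_val mul1r.
split; last exact: dnormE.
split; first exact: ex_diff.
by exists 1.
Qed.


Definition CU (U : set V) (f : V -> V) :=
  (forall x, U x -> U (f x)) /\ (forall x, U x -> CA f x).

Lemma CU_conf U f : conformal_C1_into U f -> CU U f.
Proof. by move=> [h1 _ h3 _ h5]; split => // x Ux; split; [exact: h3|exact: h5]. Qed.

Lemma CU_comp U (f g : V -> V) : CU U f -> CU U g -> CU U (f \o g).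
Proof.
move=> [f1 f2] [g1 g2]; split => [x Ux|x Ux]; first by apply: f1; apply: g1.
by case: (CA_comp (g2 _ Ux) (f2 _ (g1 _ Ux))).
Qed.

Lemma CU_id U : CU U id.
Proof. by split => // x _; case: (CA_id x). Qed.

Lemma comp_seq_cons (f : V -> V) fs : comp_seq (f :: fs) = f \o comp_seq fs.
Proof. by []. Qed.

Lemma comp_seq_cat (fs gs : seq (V -> V)) : comp_seq (fs ++ gs) = comp_seq fs \o comp_seq gs.
Proof. by elim: fs => // f fs IH; rewrite cat_cons !comp_seq_cons IH. Qed.

Lemma CU_comp_seq U (fs : seq (V -> V)) : (forall f, f \in fs -> CU U f) -> CU U (comp_seq fs).
Proof.
elim: fs => [|f fs IH] H; first exact: CU_id.
rewrite comp_seq_cons; apply: CU_comp; first by apply: H; rewrite inE eqxx.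
by apply: IH => g hg; apply: H; rewrite inE hg orbT.
Qed.


Section System.
Unset Implicit Arguments.
Variables (X : set V) (N : nat -> nat) (phi : forall j, 'I_(N j) -> V -> V)
  (U : set V) (K : R).
Hypotheses (XU : X `<=` U) (hconf : forall j i, conformal_C1_into U (phi j i))
  (K1 : 1 <= K)
  (hdist : forall k m (w : forall j : 'I_m.+1, 'I_(N (k + j)%N)) x y,
              U x -> U y ->
              dnorm (comp_from phi w) x <= K * dnorm (comp_from phi w) y).
Set Implicit Arguments.

Lemma dist_seq k m (G : nat -> V -> V) :
  (forall i, (k <= i < k + m.+1)%N -> exists a : 'I_(N i), G i = phi i a) ->
  forall x y, U x -> U y ->
  dnorm (comp_seq (map G (iota k m.+1))) x <= K * dnorm (comp_seq (map G (iota k m.+1))) y.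
Proof.
move=> H.
have hw : forall j : 'I_m.+1, exists a : 'I_(N (k + j)), G (k + j)%N = phi (k + j) a.
  by move=> j; apply: H; rewrite leq_addr /= ltn_add2l.
pose w j := sval (cid (hw j)).
have -> : comp_seq (map G (iota k m.+1)) = comp_from phi w.
  rewrite /comp_from -[k in iota k]addn0 iotaDl -val_enum_ord -!map_comp.
  congr comp_seq; apply: eq_map => j /=.
  by rewrite /w; case: cid.
exact: hdist.
Qed.

Lemma dist_pre k (G : nat -> V -> V) :
  (forall i, (i < k)%N -> exists a : 'I_(N i), G i = phi i a) ->
  forall x y, U x -> U y ->
  dnorm (comp_seq (map G (iota 0 k))) x <= K * dnorm (comp_seq (map G (iota 0 k))) y.
Proof.
case: k => [|k] H x y Ux Uy.
  by rewrite /= !(proj2 (CA_id _)) mulr1.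
by apply: dist_seq => // i /andP[_ hi]; apply: H.
Qed.

Lemma CU_seq (s : seq nat) (G : nat -> V -> V) :
  (forall i, i \in s -> exists a : 'I_(N i), G i = phi i a) ->
  CU U (comp_seq (map G s)).
Proof.
move=> H; apply: CU_comp_seq => f /mapP [i hi ->].
by have [a ->] := H i hi; apply: CU_conf.
Qed.

Lemma Dnorm_bound (f : V -> V) x0 : X x0 ->
  (forall y z, U y -> U z -> dnorm f y <= K * dnorm f z) ->
  (forall z, X z -> dnorm f z <= Dnorm X f) /\ (forall y, U y -> Dnorm X f <= K * dnorm f y).
Proof.
move=> X0 hf.
have ub : has_ubound [set dnorm f x | x in X].
  by exists (K * dnorm f x0) => _ [z Xz <-]; apply: hf; apply: XU.
split.
  by move=> z Xz; apply: (ub_le_sup ub); exists z.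
move=> y Uy; apply: ge_sup; first by exists (dnorm f x0), x0.
by move=> _ [z Xz <-]; apply: hf => //; apply: XU.
Qed.


Notation word n := {dffun forall j : 'I_n, 'I_(N j)}.

Definition Gw n (w : word n) : nat -> V -> V :=
  fun i => if (insub i : option 'I_n) is Some j then phi j (w j) else id.

Lemma Gw_at n (w : word n) (j : 'I_n) : Gw w j = phi j (w j).
Proof. by rewrite /Gw valK. Qed.

Lemma Gw_phi n (w : word n) i : (i < n)%N -> exists a : 'I_(N i), Gw w i = phi i a.
Proof. by move=> hi; exists (w (Ordinal hi)); rewrite -[in LHS]/(nat_of_ord (Ordinal hi)) Gw_at. Qed.

Lemma comp_wordE n (w : word n) : comp_word phi w = comp_seq (map (Gw w) (iota 0 n)).
Proof.
rewrite /comp_word -val_enum_ord -map_comp; congr comp_seq.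
by apply: eq_map => j /=; rewrite Gw_at.
Qed.


Lemma CU_word n (w : word n) : CU U (comp_word phi w).
Proof. by rewrite comp_wordE; apply: CU_seq => i; rewrite mem_iota => /andP[_ hi]; apply: Gw_phi. Qed.

Lemma word_dist n (w : word n) : (0 < n)%N -> forall y z, U y -> U z ->
  dnorm (comp_word phi w) y <= K * dnorm (comp_word phi w) z.
Proof. by move=> n0; rewrite comp_wordE; apply: dist_pre => i hi; apply: Gw_phi. Qed.

Lemma dist1 j (a : 'I_(N j)) y z : U y -> U z -> dnorm (phi j a) y <= K * dnorm (phi j a) z.
Proof.
move=> Uy Uz; have := @dist_seq j 0 (fun _ => phi j a); apply => // i /andP[h1 h2].
have eij : i = j by apply/eqP; rewrite eqn_leq h1 -ltnS -(addn1 j) h2.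
by subst i; exists a.
Qed.

Lemma dnorm3 (P A S : V -> V) x : CU U P -> CU U A -> CU U S -> U x ->
  dnorm (P \o (A \o S)) x = dnorm P (A (S x)) * (dnorm A (S x) * dnorm S x).
Proof.
move=> [P1 P2] [A1 A2] [S1 S2] Ux.
have [hAS eAS] := CA_comp (S2 _ Ux) (A2 _ (S1 _ Ux)).
have [_ e] := CA_comp hAS (P2 _ (A1 _ (S1 _ Ux))).
by rewrite e eAS.
Qed.

Lemma dnorm_gt0 (f : V -> V) x : CU U f -> U x -> 0 < dnorm f x.
Proof. by move=> [_ h] Ux; case: (CA_dnorm (h _ Ux)). Qed.


Definition upd n (w : word n) (kk : 'I_n) (b : 'I_(N kk)) : word n :=
  [ffun j => @dfwith _ (fun j : 'I_n => 'I_(N j)) w kk b j].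
Arguments upd {n} w kk b.

Lemma upd_in n (w : word n) kk b : upd w kk b kk = b.
Proof. by rewrite ffunE; apply: dfwith_in. Qed.

Lemma upd_out n (w : word n) kk b j : kk != j -> upd w kk b j = w j.
Proof. by move=> h; rewrite ffunE; apply: dfwith_out. Qed.

Lemma Gw_upd_out n (w : word n) (kk : 'I_n) b (i : nat) : i != (kk : nat) -> Gw (upd w kk b) i = Gw w i.
Proof.
rewrite /Gw; case: insubP => [j _ ej|] // hi.
rewrite upd_out //; rewrite -ej in hi; by apply: contraNneq hi => ->.
Qed.

Lemma iota_split n (kk : 'I_n) :
  iota 0 n = iota 0 kk ++ (kk : nat) :: iota kk.+1 (n - kk.+1).
Proof.
have e : n = (kk + (n - kk.+1).+1)%N by rewrite subnSK // subnKC // ltnW.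
by rewrite {1}e iotaD.
Qed.

Lemma comp_split n (kk : 'I_n) (H : nat -> V -> V) :
  comp_seq (map H (iota 0 n)) =
  comp_seq (map H (iota 0 kk)) \o (H (kk : nat) \o comp_seq (map H (iota kk.+1 (n - kk.+1)))).
Proof. by rewrite (iota_split kk) map_cat comp_seq_cat map_cons comp_seq_cons. Qed.


Lemma replace n (w : word n) (kk : 'I_n) (b : 'I_(N kk)) x0 : X x0 ->
  Dnorm X (comp_word phi w) * Dnorm X (phi kk b) <=
  K ^+ 3 * Dnorm X (phi kk (w kk)) * Dnorm X (comp_word phi (upd w kk b)).
Proof.
move=> X0.
have n0 : (0 < n)%N := leq_ltn_trans (leq0n kk) (ltn_ord kk).
have [_ W'2] := Dnorm_bound X0 (word_dist (upd w kk b) n0).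
have [W'1 _] := Dnorm_bound X0 (word_dist (upd w kk b) n0).
have [B1 B2] := Dnorm_bound X0 (@dist1 kk b).
have [A1 A2] := Dnorm_bound X0 (@dist1 kk (w kk)).
have CUP : CU U (comp_seq (map (Gw w) (iota 0 kk))).
  apply: CU_seq => i; rewrite mem_iota => /andP[_ hi]; apply: Gw_phi.
  by rewrite add0n in hi; exact: ltn_trans hi (ltn_ord kk).
have CUS : CU U (comp_seq (map (Gw w) (iota kk.+1 (n - kk.+1)))).
  apply: CU_seq => i; rewrite mem_iota => /andP[_ hi]; apply: Gw_phi.
  by rewrite subnKC in hi.
have Pd := @dist_pre kk (Gw w) (fun i hi => Gw_phi w (ltn_trans hi (ltn_ord kk))).
have eW : comp_word phi w = comp_seq (map (Gw w) (iota 0 kk)) \o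
   (phi kk (w kk) \o comp_seq (map (Gw w) (iota kk.+1 (n - kk.+1)))).
  by rewrite comp_wordE (comp_split kk) Gw_at.
have eW' : comp_word phi (upd w kk b) = comp_seq (map (Gw w) (iota 0 kk)) \o
   (phi kk b \o comp_seq (map (Gw w) (iota kk.+1 (n - kk.+1)))).
  have e1 : map (Gw (upd w kk b)) (iota 0 kk) = map (Gw w) (iota 0 kk).
    apply/eq_in_map => i; rewrite mem_iota => /andP[_ h2].
    by apply: Gw_upd_out; rewrite neq_ltn -{1}(add0n i) h2.
  have e2 : map (Gw (upd w kk b)) (iota kk.+1 (n - kk.+1)) = map (Gw w) (iota kk.+1 (n - kk.+1)).
    apply/eq_in_map => i; rewrite mem_iota => /andP[h1 _].
    by apply: Gw_upd_out; rewrite neq_ltn h1 orbT.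
  by rewrite comp_wordE (comp_split kk) Gw_at upd_in e1 e2.
rewrite eW' in W'1 W'2 *; rewrite eW.
set P := comp_seq (map (Gw w) (iota 0 kk)) in W'1 W'2 Pd CUP CUS *.
set S := comp_seq (map (Gw w) (iota kk.+1 (n - kk.+1))) in W'1 W'2 CUS *.
set A := phi kk (w kk); set B := phi kk b.
have CUA : CU U A by apply: CU_conf; apply: hconf.
have CUB : CU U B by apply: CU_conf; apply: hconf.
have DB0 : 0 < Dnorm X B.
  by apply: lt_le_trans (B1 _ X0); apply: dnorm_gt0 => //; apply: XU.
rewrite -ler_pdivlMr // {1}/Dnorm; apply: ge_sup; first by exists (dnorm (P \o (A \o S)) x0), x0.
move=> _ [x Xx <-]; have Ux := XU _ Xx.
rewrite (ler_pdivlMr _ _ DB0) (dnorm3 CUP CUA CUS Ux).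
have Us : U (S x) by apply: (proj1 CUS).
have h1 := Pd (A (S x)) (B (S x)) ((proj1 CUA) _ Us) ((proj1 CUB) _ Us).
have K0 : 0 < K by apply: lt_le_trans K1.
have h2 : dnorm A (S x) <= K * Dnorm X A.
  apply: le_trans (@dist1 kk (w kk) _ x0 Us (XU _ X0)) _.
  rewrite (ler_pM2l K0); exact: A1.
have h3 := B2 _ Us.
have h4 := W'1 _ Xx; rewrite (dnorm3 CUP CUB CUS Ux) in h4.
have p1 := dnorm_gt0 CUP ((proj1 CUA) _ Us).
have p2 := dnorm_gt0 CUA Us.
have p3 := dnorm_gt0 CUS Ux.
have p4 := dnorm_gt0 CUP ((proj1 CUB) _ Us).
have p5 := dnorm_gt0 CUB Us.
have DA0 : 0 < Dnorm X A by apply: lt_le_trans (A1 _ X0); apply: dnorm_gt0 CUA (XU _ X0).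
exact: (arith3 K0 p1 p2 p3 p4 p5 DB0 DA0 h1 h2 h3 h4).
Qed.


Lemma sup_ge0' (E : set R) : (forall x, E x -> 0 <= x) -> 0 <= sup E.
Proof.
move=> h; have [[[x Ex] ub]|hs] := pselect (has_sup E).
  by apply: le_trans (h _ Ex) _; apply: (ub_le_sup ub).
by rewrite sup_out.
Qed.

Lemma dnorm_ge0 (f : V -> V) x : 0 <= dnorm f x.
Proof. by apply: sup_ge0' => _ [h _ <-]; apply: sqrtr_ge0. Qed.

Lemma Dnorm_ge0 (f : V -> V) : 0 <= Dnorm X f.
Proof. by apply: sup_ge0' => _ [x _ <-]; apply: dnorm_ge0. Qed.

Lemma sum_le_sub (I : finType) (P Q : pred I) (g : I -> R) :
  (forall i, P i -> Q i) -> (forall i, Q i -> 0 <= g i) ->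
  \sum_(i | P i) g i <= \sum_(i | Q i) g i.
Proof.
move=> PQ g0; rewrite [X in _ <= X](bigID P) /= -[X in X <= _]addr0.
apply: lerD.
  rewrite (eq_bigl P) ?lexx // => i; apply/andP/idP => [[]|h] //.
  by split => //; apply: PQ.
by apply: sumr_ge0 => i /andP[h _]; apply: g0.
Qed.

Variables (F : forall j, {set 'I_(N j)}) (t : R).
Hypothesis t0 : 0 < t.

Definition W n (w : word n) := Dnorm X (comp_word phi w).
Definition keep n k (w : word n) : bool := [forall j : 'I_n, (j < k)%N ==> (w j \in F j)].
Definition Zk n k := \sum_(w : word n | keep k w) W w `^ t.

Lemma keepS n (kk : 'I_n) (w : word n) : keep kk.+1 w = keep kk w && (w kk \in F kk).
Proof.
apply/forallP/andP => [h|[/forallP h1 h2] j].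
  split; last by apply: (implyP (h kk)).
  by apply/forallP => j; apply/implyP => hj; apply: (implyP (h j)); apply: leqW.
apply/implyP; rewrite ltnS leq_eqVlt => /orP[/eqP e|hj].
  by have -> : j = kk by apply: val_inj.
exact: (implyP (h1 j)).
Qed.

Lemma inner n (kk : 'I_n) (m : 'I_(N kk)) (P : pred (word n)) (g : word n -> R) a :
  m \in F kk -> (forall w, 0 <= g w) -> (forall w, P w -> keep kk w) ->
  \sum_(w | P w && (w kk == a)) g (upd w kk m) <= \sum_(w | keep kk.+1 w) g w.
Proof.
move=> mF g0 Pk.
have inj : {in [pred w | P w && (w kk == a)] &, injective (fun w => upd w kk m)}.
  move=> w1 w2 /andP[_ /eqP e1] /andP[_ /eqP e2] e; apply/ffunP => j.
  case: (eqVneq kk j) => [<-|hj]; first by rewrite e1 e2.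
  by have := congr1 (fun v : word n => v j) e; rewrite /= !upd_out.
rewrite (eq_bigl (fun w => w \in [pred w | P w && (w kk == a)])) //.
rewrite -(big_imset _ inj) /=.
apply: sum_le_sub => // v /imsetP [w /andP[Pw /eqP ew] ->].
rewrite keepS upd_in mF andbT; apply/forallP => j; apply/implyP => hj.
rewrite upd_out; first exact: (implyP (forallP (Pk _ Pw) j)).
by apply: contraTneq hj => <-; rewrite ltnn.
Qed.


Lemma W_ge0 n (w : word n) : 0 <= W w.
Proof. exact: Dnorm_ge0. Qed.

Lemma stepZ n (kk : 'I_n) (m : 'I_(N kk)) x0 : X x0 -> m \in F kk ->
  Zk n kk <= Zk n kk.+1 +
    (\sum_(a | a \notin F kk) (K ^+ 3 * Dnorm X (phi kk a) / Dnorm X (phi kk m)) `^ t)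
      * Zk n kk.+1.
Proof.
move=> X0 mF.
rewrite /Zk (bigID (fun w : word n => w kk \in F kk)) /=.
rewrite (eq_bigl (fun w => keep kk.+1 w)); last by move=> w; rewrite keepS.
apply: lerD; first exact: lexx.
have [B1 _] := Dnorm_bound X0 (@dist1 kk m).
have Dm0 : 0 < Dnorm X (phi kk m).
  apply: lt_le_trans (B1 _ X0); apply: dnorm_gt0 (XU _ X0); apply: CU_conf; apply: hconf.
apply: (le_trans (y := \sum_(w | keep kk w && (w kk \notin F kk))
   (K ^+ 3 * Dnorm X (phi kk (w kk)) / Dnorm X (phi kk m)) `^ t * W (upd w kk m) `^ t)).
  apply: ler_sum => w _.
  have h := replace w m X0.
  have c0 : 0 <= K ^+ 3 * Dnorm X (phi kk (w kk)) / Dnorm X (phi kk m).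
    by apply: divr_ge0; [apply: mulr_ge0; [apply: exprn_ge0; apply: le_trans K1|apply: Dnorm_ge0]|apply: ltW].
  rewrite -(powRM _ c0 (W_ge0 _)).
  apply: (ge0_ler_powR (ltW t0)).
  - by rewrite nnegrE; apply: W_ge0.
  - by rewrite nnegrE; apply: mulr_ge0; [exact: c0|apply: W_ge0].
  rewrite mulrAC (ler_pdivlMr _ _ Dm0); exact: h.
rewrite (partition_big (fun w : word n => w kk) (fun a => a \notin F kk)) /=; last first.
  by move=> w /andP[].
rewrite mulr_suml; apply: ler_sum => a ha.
rewrite (eq_bigr (fun w => (K ^+ 3 * Dnorm X (phi kk a) / Dnorm X (phi kk m)) `^ t *
   W (upd w kk m) `^ t)); last by move=> w /andP[_ /eqP ->].
rewrite -mulr_sumr; apply: ler_wpM2l; first exact: powR_ge0.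
apply: (inner (P := fun w => keep kk w && (w kk \notin F kk))).
- exact: mF.
- by move=> w; apply: powR_ge0.
- by move=> w /andP[].
Qed.


Lemma Zprod n (beta : nat -> R) : (forall j, 0 <= beta j) ->
  (forall kk : 'I_n, Zk n kk <= beta kk * Zk n kk.+1) ->
  Zk n 0 <= (\prod_(j < n) beta j) * Zk n n.
Proof.
move=> b0 hs.
suff H : forall k, (k <= n)%N -> Zk n 0 <= (\prod_(j < k) beta j) * Zk n k by apply: H.
elim => [|k IH] hk; first by rewrite big_ord0 mul1r; exact: lexx.
apply: le_trans (IH (ltnW hk)) _.
rewrite big_ord_recr /= -mulrA; apply: ler_wpM2l.
  by apply: prodr_ge0 => j _; apply: b0.
exact: (hs (Ordinal hk)).
Qed.

Definition emb n (u : {dffun forall j : 'I_n, 'I_(subN F j)}) : word n :=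
  [ffun j => enum_val (u j)].

Lemma Zsub n : Zn X (subphi phi F) n t = Zk n n.
Proof.
have e : forall u : {dffun forall j : 'I_n, 'I_(subN F j)},
    comp_word (subphi phi F) u = comp_word phi (emb u).
  by move=> u; rewrite /comp_word; congr comp_seq; apply: eq_map => j; rewrite ffunE.
rewrite /Zn (eq_bigr (fun u => W (emb u) `^ t)); last by move=> u _; rewrite e.
have inj : {in [set: {dffun forall j : 'I_n, 'I_(subN F j)}] &, injective (@emb n)}.
  move=> u1 u2 _ _ h; apply/ffunP => j.
  have := congr1 (fun v : word n => v j) h; rewrite /= !ffunE; apply: enum_val_inj.
rewrite (eq_bigl (fun u => u \in [set: {dffun forall j : 'I_n, 'I_(subN F j)}])); last first.
  by move=> u; rewrite in_setT.
rewrite -(@big_imset _ _ _ _ _ (@emb n) _ (fun w : word n => W w `^ t) inj) /Zk; apply: eq_bigl => w.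
apply/imsetP/idP => [[u _ ->]|hw].
  by apply/forallP => j; apply/implyP => _; rewrite ffunE; apply: enum_valP.
have hw' : forall j, w j \in F j by move=> j; apply: (implyP (forallP hw j)).
exists ([ffun j => enum_rank_in (hw' j) (w j)] : {dffun forall j : 'I_n, 'I_(subN F j)}).
  by rewrite in_setT.
by apply/ffunP => j; rewrite !ffunE (enum_rankK_in (hw' j) (hw' j)).
Qed.


Lemma Zfull n : Zn X phi n t = Zk n 0.
Proof. by rewrite /Zk; apply: eq_bigl => w; apply/esym/forallP => j; rewrite ltn0. Qed.

Lemma Zk_mono n : Zk n n <= Zk n 0.
Proof.
apply: sum_le_sub => [w _|w _]; last exact: powR_ge0.
by apply/forallP => j; rewrite ltn0.
Qed.

Lemma Zk_pos n x0 : X x0 -> (forall j, exists a : 'I_(N j), a \in F j) -> Zk n.+1 n.+1 > 0.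
Proof.
move=> X0 hF.
pose m j := sval (cid (hF j)).
have mF : forall j, m j \in F j by move=> j; rewrite /m; case: cid.
pose ws : word n.+1 := [ffun j : 'I_n.+1 => m j].
have kw : keep n.+1 ws by apply/forallP => j; apply/implyP => _; rewrite ffunE.
rewrite /Zk (bigD1 ws kw) /=.
have [B1 _] := Dnorm_bound X0 (word_dist ws (ltn0Sn n)).
have W0 : 0 < W ws.
  apply: lt_le_trans (B1 _ X0); apply: dnorm_gt0 (XU _ X0); exact: CU_word.
apply: (lt_le_trans (powR_gt0 t W0)); rewrite lerDl.
by apply: sumr_ge0 => w _; apply: powR_ge0.
Qed.


Lemma sum_bound k (m : 'I_(N k)) (al s0 : R) x0 : X x0 -> 0 < s0 -> s0 <= t -> 1 <= al ->
  (forall a, a \notin F k -> al * (N k)%:R `^ s0^-1 * Dnorm X (phi k a) <= Dnorm X (phi k m)) ->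
  \sum_(a | a \notin F k) (K ^+ 3 * Dnorm X (phi k a) / Dnorm X (phi k m)) `^ t
    <= (K ^+ 3) `^ t / al `^ t.
Proof.
move=> X0 s00 st al1 h.
have [B1 _] := Dnorm_bound X0 (@dist1 k m).
have Dm0 : 0 < Dnorm X (phi k m).
  apply: lt_le_trans (B1 _ X0); apply: dnorm_gt0 (XU _ X0); apply: CU_conf; apply: hconf.
have N1 : 1 <= (N k)%:R :> R.
  by rewrite ler1n; exact: (leq_ltn_trans (leq0n m) (ltn_ord m)).
have K3 : 0 <= K ^+ 3 by apply: exprn_ge0; apply: le_trans K1.
apply: (le_trans (y := \sum_(a | a \notin F k) (K ^+ 3) `^ t / (al `^ t * (N k)%:R))).
  apply: ler_sum => a ha.
  exact: (pow_bound t0 s00 st al1 N1 Dm0 (Dnorm_ge0 _) K3 (h a ha)).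
have al0 : 0 < al by apply: lt_le_trans al1.
have c0 : 0 <= (K ^+ 3) `^ t / (al `^ t * (N k)%:R).
  by apply: divr_ge0; [exact: powR_ge0|apply: mulr_ge0; [exact: powR_ge0|apply: ler0n]].
apply: (le_trans (y := \sum_(a : 'I_(N k)) (K ^+ 3) `^ t / (al `^ t * (N k)%:R))).
  by apply: sum_le_sub.
rewrite sumr_const card_ord -(mulr_natr ((K ^+ 3) `^ t / (al `^ t * (N k)%:R))).
have -> : (K ^+ 3) `^ t / (al `^ t * (N k)%:R) * (N k)%:R = (K ^+ 3) `^ t / al `^ t.
  field; apply/andP; split; apply: lt0r_neq0; [apply: powR_gt0 al0|apply: lt_le_trans N1; exact: ltr01].
exact: lexx.
Qed.

End System.
End Analysis.

Unset Implicit Arguments.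
Theorem corollary5p2 (R : realType) (d : nat) (hd : (0 < d)%N)
  (X : set 'rV[R]_d) (hX : admissible_X X)
  (N : nat -> nat) (hN : forall j, (0 < N j)%N)
  (phi : forall j, 'I_(N j) -> 'rV[R]_d -> 'rV[R]_d)
  (hPhi : is_NCIFS X phi)
  (t0 : R) (ht0 : 0 < t0)
  (alpha : nat -> R) (halpha1 : forall n, 1 <= alpha n)
  (halpha : alpha @ \oo --> +oo) :
  exists F : forall j, {set 'I_(N j)},
    [/\ (forall j, (0 < #|F j|)%N),
        (forall t, t0 <= t ->
           lower_pressure X (N := subN F) (subphi phi F) t = lower_pressure X phi t)
      & (forall n (a b : 'I_(N n)), a \in F n -> b \in F n ->
           Dnorm X (phi n a) / Dnorm X (phi n b)
             <= alpha n * (N n)%:R `^ t0^-1)].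
Proof.
case: hPhi => _ _ [U [_ _ XU hconf [K K1 hdist]]] _.
pose Dn k (a : 'I_(N k)) := Dnorm X (phi k a).
pose i0 k : 'I_(N k) := Ordinal (hN k).
pose m k : 'I_(N k) := [arg max_(i > i0 k) Dn k i]%O.
have hm : forall k a, Dn k a <= Dn k (m k).
  move=> k a; rewrite /m; case: (@arg_maxP _ _ _ (i0 k) xpredT (Dn k) isT) => i _ hi.
  exact: (hi a isT).
pose q k := (N k)%:R `^ t0^-1 : R.
have q1 : forall k, 1 <= q k.
  move=> k; have N1 : 1 <= (N k)%:R :> R by rewrite ler1n; exact: hN.
  have e0 : 0 <= t0^-1 by rewrite invr_ge0; exact: ltW.
  rewrite /q -[X in X <= _](powRr0 (N k)%:R); apply: (ler_powR N1); exact: e0.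
have aq1 : forall k, 1 <= alpha k * q k.
  by move=> k; rewrite -[1]mul1r; apply: ler_pM; [exact: ler01|exact: ler01|exact: halpha1|exact: q1].
pose F k : {set 'I_(N k)} := [set a | Dn k (m k) <= alpha k * q k * Dn k a]%SET.
have mF : forall k, m k \in F k.
  move=> k; rewrite inE -[X in X <= _]mul1r.
  by apply: ler_pM; [exact: ler01|exact: Dnorm_ge0|exact: aq1|exact: lexx].
exists F; split.
- by move=> j; apply/card_gt0P; exists (m j); apply: mF.
- move=> t ht.
  have tpos : 0 < t := lt_le_trans ht0 ht.
  have [[x0 X0]|nX] := pselect (exists x0, X x0); last first.
    have Z0 : forall (N' : nat -> nat) (psi : forall j, 'I_(N' j) -> 'rV[R]_d -> 'rV[R]_d) n,
        Zn X psi n t = 0.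
      move=> N' psi n; rewrite /Zn big1 // => w _.
      have -> : Dnorm X (comp_word psi w) = 0.
        rewrite /Dnorm (_ : [set dnorm (comp_word psi w) x | x in X] = set0) ?sup0 //.
        apply/seteqP; split => y; last by [].
        by case=> x Xx _; exfalso; apply: nX; exists x.
      by rewrite powR0 // lt0r_neq0.
    by rewrite /lower_pressure; congr limn_einf; apply/funext => n; rewrite !Z0.
  have hF : forall j, exists a, a \in F j by move=> j; exists (m j); apply: mF.
  pose u j := (K ^+ 3) `^ t / alpha j `^ t.
  have u0 : forall j, 0 <= u j by move=> j; apply: divr_ge0; apply: powR_ge0.
  have Zk0 : forall n k, 0 <= Zk X phi F t n k.
    by move=> n k; apply: sumr_ge0 => w _; apply: powR_ge0.
  have step : forall n (kk : 'I_n), Zk X phi F t n kk <= (1 + u kk) * Zk X phi F t n kk.+1.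
    move=> n kk.
    have h1 := stepZ hd XU hconf K1 hdist tpos X0 (mF kk).
    have h2 : \sum_(a | a \notin F kk)
       (K ^+ 3 * Dnorm X (phi kk a) / Dnorm X (phi kk (m kk))) `^ t <= u kk.
      apply: (sum_bound hd XU hconf K1 hdist tpos X0 ht0 ht (halpha1 kk)).
      by move=> a; rewrite inE -ltNge => /ltW.
    apply: le_trans h1 _; rewrite mulrDl mul1r lerD2l.
    exact: (ler_wpM2r (Zk0 _ _) h2).
  have Zs0 : forall n, 0 < Zk X phi F t n.+1 n.+1.
    by move=> n; apply: (Zk_pos hd XU hconf K1 hdist t n X0 hF).
  pose a n := ln (Zn X (subphi phi F) n.+1 t) / n.+1%:R.
  pose b n := ln (Zn X phi n.+1 t) / n.+1%:R.
  pose e n := arithmetic_mean u n.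
  apply/esym; apply: (liminf_sandwich (a := a) (b := b) (e := e)).
  + move=> n; rewrite /a /b Zsub (Zfull X phi F); apply: ler_wpM2r.
      by rewrite invr_ge0.
    rewrite ler_ln ?posrE; [exact: Zk_mono|exact: Zs0|].
    exact: lt_le_trans (Zs0 n) (Zk_mono _ _ _ _ _).
  + move=> n; rewrite /a /b /e /arithmetic_mean /series /= big_mkord Zsub (Zfull X phi F).
    have P := Zprod (beta := fun j => 1 + u j) (fun j => addr_ge0 ler01 (u0 j)) (@step n.+1).
    have Pp : 0 < \prod_(j < n.+1) (1 + u j).
      by apply: prodr_gt0 => j _; apply: (lt_le_trans ltr01); rewrite lerDl.
    have hl : ln (Zk X phi F t n.+1 0) <= ln (Zk X phi F t n.+1 n.+1) + \sum_(j < n.+1) u j.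
      apply: (le_trans (y := ln (\prod_(j < n.+1) (1 + u j) * Zk X phi F t n.+1 n.+1))).
        rewrite ler_ln ?posrE; [exact: P| |exact: mulr_gt0].
        exact: lt_le_trans (Zs0 n) (Zk_mono _ _ _ _ _).
      rewrite lnM ?posrE // addrC lerD2l; exact: ln_prod.
    rewrite [X in _ <= _ + X]mulrC -mulrDl; apply: ler_wpM2r hl.
    by rewrite invr_ge0.
  + exact: cesaro (u_cvg (powR_ge0 _ _) tpos halpha1 halpha).
- move=> n a b; rewrite !inE => ha hb.
  have Db0 := Dnorm_ge0 X (phi n b).
  case: (eqVneq (Dn n b) 0) => [e0|ne0].
    rewrite /Dn in e0; rewrite e0 invr0 mulr0; apply: mulr_ge0; last exact: powR_ge0.
    exact: le_trans ler01 (halpha1 n).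
  have Dbpos : 0 < Dn n b by rewrite lt0r ne0 Db0.
  rewrite (ler_pdivrMr _ _ Dbpos); apply: le_trans (hm n a) _; exact: hb.
Qed.
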